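(* Let $X$ be a non-empty set, $\overline X=X\cup X'$ and $\widetilde X=\overline X\cup\{(x\wedge y):x,y\in\overline X\}$. Make the free semigroup $\widetilde X^+$ into a binary semigroup by $(u\wedge v)=(\iota u\wedge v\tau)$ for $u,v\in\widetilde X^+$. Then the relation $\widetilde\Theta(\mathcal{CS},X)=\{(u,v)\in\widetilde X^+\times\widetilde X^+:\overline{u}=\overline{v}\}$ (where $\overline{w}$ denotes the reduced form of $w$) is a congruence on the binary semigroup $\widetilde X^+$, and the factor $\widetilde X^+/\widetilde\Theta(\mathcal{CS},X)$ together with the matched mapping $\xi\colon\overline X\to \widetilde X^+/\widetilde\Theta(\mathcal{CS},X)$, $y\mapsto y\widetilde\Theta(\mathcal{CS},X)$, is a bifree object in the class $\mathcal{CS}$ of completely simple semigroups on $X$.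
   Context: $X'=\{x':x\in X\}$ is a set disjoint from $X$ in bijection with $X$ via $x\mapsto x'$; extend $'$ to $\overline X$ by $(x')'=x$. The free binary semigroup $F_2(\overline X)$ is the smallest set $W$ of nonempty words over $\overline X\cup\{(,\wedge,)\}$ containing $\overline X$ and closed under concatenation $uv$ and under $(u,v)\mapsto(u\wedge v)$, with these two operations. Elements $(x\wedge y)$, $x,y\in\overline X$, are called $\wedge$-letters; $\widetilde X^+$ is the free semigroup on $\widetilde X$, viewed as a subset of $F_2(\overline X)$. For a term $w$, $\iota w$ [$w\tau$] is the first [last] element of $\overline X$ occurring in $w$. Reductions ($u,v$ terms, $x,y,z\in\overline X$): (R0) $(u\wedge v)\rightsquigarrow(\iota u\wedge v\tau)$; (R1) $x(y\wedge x)\rightsquigarrow x$; (R2) $(x\wedge y)x\rightsquigarrow x$; (R3) $(x\wedge y)(x\wedge z)\rightsquigarrow(x\wedge z)$; (R4) $(z\wedge x)(y\wedge x)\rightsquigarrow(z\wedge x)$; (R5) $x'x\rightsquigarrow(x'\wedge x)$, applied to segments of a term. It is known (Auinger) that every term has a unique reduced form (one to which no reduction applies) obtainable by repeated reductions; denote it $\overline w$. For a regular semigroup $S$, a map $\nu\colon\overline X\to S$ is matched if $x'\nu$ is an inverse of $x\nu$ for all $x\in X$. A bifree object in a class $\mathcal K$ of regular semigroups on $X$ is $B\in\mathcal K$ with a matched map $\xi\colon\overline X\to B$ such that for every $S\in\mathcal K$ and matched $\nu\colon\overline X\to S$ there is a unique homomorphism $\phi\colon B\to S$ with $\xi\phi=\nu$.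 *)

(* Defs.v *)
From Stdlib Require Import List Relations ClassicalEpsilon.
Import ListNotations.
Set Implicit Arguments.

(* Xbar X = X ∪ X' : inl x stands for x, inr x stands for x'. *)
Definition Xbar (X : Type) : Type := (X + X)%type.
Definition primeX {X : Type} (a : Xbar X) : Xbar X :=
  match a with inl x => inr x | inr x => inl x end.

(* Xtilde X = Xbar ∪ { (x ∧ y) : x, y ∈ Xbar } *)
Inductive tletter (X : Type) : Type :=
| TL : Xbar X -> tletter X
| TW : Xbar X -> Xbar X -> tletter X.
Arguments TL {X} a.
Arguments TW {X} a b.

Definition iota_l {X} (t : tletter X) : Xbar X :=
  match t with TL a => a | TW a _ => a end.
Definition tau_l {X} (t : tletter X) : Xbar X :=
  match t with TL a => a | TW _ b => b end.

Record neword (X : Type) := NeWord { nw_hd : tletter X; nw_tl : list (tletter X) }.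
Arguments NeWord {X} _ _.
Definition to_list {X} (u : neword X) : list (tletter X) := nw_hd u :: nw_tl u.

Definition nw_cat {X} (u v : neword X) : neword X :=
  NeWord (nw_hd u) (nw_tl u ++ to_list v).

Definition nw_iota {X} (u : neword X) : Xbar X := iota_l (nw_hd u).
Definition nw_tau {X} (u : neword X) : Xbar X := tau_l (last (nw_tl u) (nw_hd u)).

Definition nw_wedge {X} (u v : neword X) : neword X :=
  NeWord (TW (nw_iota u) (nw_tau v)) [].

Definition nw_single {X} (y : Xbar X) : neword X := NeWord (TL y) [].

(* ---------- reductions R1-R5 (R0 is trivial on Xtilde^+) ---------- *)
Inductive red_rule {X : Type} : list (tletter X) -> list (tletter X) -> Prop :=
| R1 (x y : Xbar X) : red_rule [TL x; TW y x] [TL x]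
| R2 (x y : Xbar X) : red_rule [TW x y; TL x] [TL x]
| R3 (x y z : Xbar X) : red_rule [TW x y; TW x z] [TW x z]
| R4 (x y z : Xbar X) : red_rule [TW z x; TW y x] [TW z x]
| R5 (x : Xbar X) : red_rule [TL (primeX x); TL x] [TW (primeX x) x].

Definition red_step {X : Type} (u v : list (tletter X)) : Prop :=
  exists p s l r, red_rule l r /\ u = p ++ l ++ s /\ v = p ++ r ++ s.

Definition reds {X : Type} : relation (list (tletter X)) :=
  clos_refl_trans _ red_step.

Definition is_reduced {X : Type} (w : list (tletter X)) : Prop :=
  forall v, ~ red_step w v.

Definition is_reduced_form {X : Type} (u w : list (tletter X)) : Prop :=
  reds u w /\ is_reduced w.

Definition ThetaCS (X : Type) (u v : neword X) : Prop :=
  exists w, is_reduced_form (to_list u) w /\ is_reduced_form (to_list v) w.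

Definition bin_congruence {X : Type} (R : neword X -> neword X -> Prop) : Prop :=
  (forall u, R u u) /\ (forall u v, R u v -> R v u) /\
  (forall u v w, R u v -> R v w -> R u w) /\
  (forall u v u' v', R u u' -> R v v' ->
     R (nw_cat u v) (nw_cat u' v') /\ R (nw_wedge u v) (nw_wedge u' v')).

Definition FactorCS (X : Type) : Type :=
  { P : neword X -> Prop | exists u, P = ThetaCS u }.

Definition cls {X : Type} (u : neword X) : FactorCS X :=
  exist _ (ThetaCS u) (ex_intro _ u eq_refl).

Definition rep {X : Type} (P : FactorCS X) : neword X :=
  proj1_sig (constructive_indefinite_description _ (proj2_sig P)).

Definition factor_mul {X : Type} (P Q : FactorCS X) : FactorCS X :=
  cls (nw_cat (rep P) (rep Q)).

Definition factor_xi {X : Type} (y : Xbar X) : FactorCS X := cls (nw_single y).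

Definition sg_assoc {S : Type} (m : S -> S -> S) : Prop :=
  forall a b c, m a (m b c) = m (m a b) c.

Definition is_ideal {S : Type} (m : S -> S -> S) (I : S -> Prop) : Prop :=
  (exists a, I a) /\ (forall a s, I a -> I (m s a) /\ I (m a s)).

Definition simple_sg {S : Type} (m : S -> S -> S) : Prop :=
  forall I, is_ideal m I -> forall a, I a.

(* primitive idempotent: minimal idempotent w.r.t. the natural order *)
Definition primitive_idem {S : Type} (m : S -> S -> S) (e : S) : Prop :=
  m e e = e /\
  (forall f, m f f = f -> m e f = f -> m f e = f -> f = e).

Definition completely_simple {S : Type} (m : S -> S -> S) : Prop :=
  sg_assoc m /\ simple_sg m /\ exists e, primitive_idem m e.

Definition is_inverse {S : Type} (m : S -> S -> S) (a b : S) : Prop :=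
  m a (m b a) = a /\ m b (m a b) = b.

Definition matched {X S : Type} (m : S -> S -> S) (nu : Xbar X -> S) : Prop :=
  forall x : X, is_inverse m (nu (inl x)) (nu (inr x)).

Definition sg_hom {S T : Type} (mS : S -> S -> S) (mT : T -> T -> T) (phi : S -> T) : Prop :=
  forall a b, phi (mS a b) = mT (phi a) (phi b).

Definition bifree_CS (X B : Type) (mB : B -> B -> B) (xi : Xbar X -> B) : Prop :=
  completely_simple mB /\ matched mB xi /\
  forall (S : Type) (mS : S -> S -> S), completely_simple mS ->
    forall nu : Xbar X -> S, matched mS nu ->
      exists phi : B -> S,
        sg_hom mB mS phi /\ (forall y, phi (xi y) = nu y) /\
        (forall psi : B -> S, sg_hom mB mS psi -> (forall y, psi (xi y) = nu y) ->
           forall b, psi b = phi b).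

(* Main.v *)
Require Import Defs.
From Stdlib Require Import List Relations ClassicalEpsilon Classical FunctionalExtensionality PropExtensionality ProofIrrelevance Lia Setoid Morphisms.
Import ListNotations.
Set Implicit Arguments.

Section Rew.
Variable X : Type.
Notation T := (tletter X).

Lemma primeX_inv (a : Xbar X) : primeX (primeX a) = a.
Proof. destruct a; reflexivity. Qed.

Lemma rule_shape (l r : list T) : red_rule l r -> exists a b c, l = [a;b] /\ r = [c].
Proof. intros H; destruct H; eauto. Qed.

Lemma rule_det (l r1 r2 : list T) : red_rule l r1 -> red_rule l r2 -> r1 = r2.
Proof. intros H1 H2; destruct H1; inversion H2; subst; congruence. Qed.

Lemma triple (d a b r1 r : T) : red_rule [d;a] [r1] -> red_rule [a;b] [r] ->
  (r1 = d /\ r = b) \/ exists s, red_rule [r1;b] [s] /\ red_rule [d;r] [s].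
Proof.
  intros H1 H2; inversion H1; subst; inversion H2; subst;
  try (left; split; reflexivity);
  try (right; eexists; split; constructor; fail).
  rewrite !primeX_inv; right; eexists; split; constructor.
Qed.

Definition joinable (u v : list T) := exists t, reds u t /\ reds v t.

Lemma step_intro p l r s (u v : list T) : red_rule l r -> u = p ++ l ++ s -> v = p ++ r ++ s -> red_step u v.
Proof. intros; exists p, s, l, r; auto. Qed.

Lemma reds1 (u v : list T) : red_step u v -> reds u v.
Proof. intros; apply rt_step; auto. Qed.

Lemma lc_aux p m s1 s2 (a1 b1 c1 a2 b2 c2 : T) :
  red_rule [a1;b1] [c1] -> red_rule [a2;b2] [c2] -> a1 :: b1 :: s1 = m ++ a2 :: b2 :: s2 ->
  joinable (p ++ c1 :: s1) (p ++ m ++ c2 :: s2).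
Proof.
  intros R1 R2 E.
  destruct m as [|x [|y m']]; simpl in E; inversion E; subst.
  - assert (c1 = c2) by (pose proof (rule_det R1 R2); congruence); subst. eexists; split; apply rt_refl.
  - destruct (triple R1 R2) as [[-> ->]|[s [S1 S2]]].
    + eexists; split; apply rt_refl.
    + exists (p ++ s :: s2); split; apply reds1.
      * eapply step_intro with (p := p) (s := s2); [exact S1|reflexivity|reflexivity].
      * eapply step_intro with (p := p) (s := s2); [exact S2|reflexivity|reflexivity].
  - exists (p ++ c1 :: m' ++ c2 :: s2); split; apply reds1.
    + eapply step_intro with (p := p ++ c1 :: m') (s := s2); [exact R2| |]; rewrite <- app_assoc; reflexivity.
    + eapply step_intro with (p := p) (s := m' ++ c2 :: s2); [exact R1|reflexivity|reflexivity].
Qed.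

Lemma lc (u v1 v2 : list T) : red_step u v1 -> red_step u v2 -> joinable v1 v2.
Proof.
  intros (p1&s1&l1&r1&R1&E1&F1) (p2&s2&l2&r2&R2&E2&F2). subst.
  destruct (rule_shape R1) as (a1&b1&c1&->&->).
  destruct (rule_shape R2) as (a2&b2&c2&->&->).
  apply app_eq_app in E2 as [m [[-> H]|[-> H]]].
  - destruct (@lc_aux p2 m s2 s1 _ _ _ _ _ _ R2 R1) as [t [T1 T2]]. simpl; simpl in H; rewrite H; reflexivity.
    exists t; split; auto. rewrite <- app_assoc; auto.
  - destruct (@lc_aux p1 m s1 s2 _ _ _ _ _ _ R1 R2) as [t [T1 T2]]. simpl; simpl in H; rewrite H; reflexivity.
    exists t; split; auto. rewrite <- app_assoc; auto.
Qed.

Lemma step_len (u v : list T) : red_step u v -> length v < length u.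
Proof.
  intros (p&s&l&r&R&->&->). destruct (rule_shape R) as (a&b&c&->&->).
  rewrite !length_app; simpl; lia.
Qed.

Lemma nf_exists : forall (u : list T), exists w, is_reduced_form u w.
Proof.
  assert (forall n (u : list T), length u < n -> exists w, is_reduced_form u w).
  { induction n; intros u Hu; [lia|].
    destruct (classic (exists v, red_step u v)) as [[v Hv]|Hn].
    - destruct (IHn v) as [w [W1 W2]]. pose proof (step_len Hv); lia.
      exists w; split; auto. eapply rt_trans; [apply reds1|]; eauto.
    - exists u; split; [apply rt_refl|]. intros v Hv; apply Hn; eauto. }
  intros u; apply (H (S (length u))); lia.
Qed.

Lemma reds_reduced (u w : list T) : reds u w -> is_reduced u -> w = u.
Proof.
  intros H Hr; apply clos_rt_rt1n in H; destruct H; auto.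
  exfalso; eapply Hr; eauto.
Qed.

Lemma nf_unique : forall (u w1 w2 : list T), is_reduced_form u w1 -> is_reduced_form u w2 -> w1 = w2.
Proof.
  assert (forall n (u : list T), length u < n -> forall w1 w2, is_reduced_form u w1 -> is_reduced_form u w2 -> w1 = w2).
  { induction n; intros u Hu w1 w2 [H1 N1] [H2 N2]; [lia|].
    apply clos_rt_rt1n in H1; apply clos_rt_rt1n in H2.
    destruct H1 as [|v1 w1x S1 H1].
    - symmetry; apply reds_reduced; auto. apply clos_rt1n_rt; auto.
    - destruct H2 as [|v2 w2x S2 H2].
      + exfalso; eapply N2; eauto.
      + destruct (lc S1 S2) as [t [T1 T2]].
        destruct (nf_exists t) as [n0 [Nt Nn]].
        pose proof (step_len S1); pose proof (step_len S2).
        transitivity n0.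
        * apply (IHn v1); [lia| split; auto; apply clos_rt1n_rt; auto|].
          split; auto; eapply rt_trans; eauto.
        * symmetry; apply (IHn v2); [lia| split; auto; apply clos_rt1n_rt; auto|].
          split; auto; eapply rt_trans; eauto. }
  intros u; apply (H (S (length u))); lia.
Qed.


Definition equiv (u v : list T) := exists w, is_reduced_form u w /\ is_reduced_form v w.

Lemma equiv_refl u : equiv u u.
Proof. destruct (nf_exists u) as [w Hw]; exists w; auto. Qed.
Lemma equiv_sym u v : equiv u v -> equiv v u.
Proof. intros [w [A B]]; exists w; auto. Qed.
Lemma equiv_trans u v w : equiv u v -> equiv v w -> equiv u w.
Proof.
  intros [a [A1 A2]] [b [B1 B2]].
  rewrite (nf_unique A2 B1) in A1. exists b; auto.
Qed.

Global Instance equiv_Equiv : Equivalence equiv.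
Proof. split; [intro; apply equiv_refl | intros ??; apply equiv_sym | intros ???; apply equiv_trans]. Qed.

Lemma reds_equiv u v : reds u v -> equiv u v.
Proof.
  intros H; destruct (nf_exists v) as [w [W1 W2]]; exists w; split; split; auto.
  eapply rt_trans; eauto.
Qed.

Lemma step_ctx p s (u v : list T) : red_step u v -> red_step (p ++ u ++ s) (p ++ v ++ s).
Proof.
  intros (p0&s0&l&r&R&->&->). exists (p ++ p0), (s0 ++ s), l, r; split; auto.
  rewrite !app_assoc; split; reflexivity.
Qed.

Lemma reds_ctx p s (u v : list T) : reds u v -> reds (p ++ u ++ s) (p ++ v ++ s).
Proof.
  induction 1; [apply rt_step, step_ctx; auto | apply rt_refl | eapply rt_trans; eauto].
Qed.

Lemma equiv_app u u' v v' : equiv u u' -> equiv v v' -> equiv (u ++ v) (u' ++ v').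
Proof.
  intros [a [[A1 _] [A2 _]]] [b [[B1 _] [B2 _]]].
  pose proof (reds_ctx [] v A1) as C1; pose proof (reds_ctx a [] B1) as D1.
  pose proof (reds_ctx [] v' A2) as C2; pose proof (reds_ctx a [] B2) as D2.
  rewrite !app_nil_r in D1, D2; simpl in C1, C2.
  assert (H1 : reds (u ++ v) (a ++ b)) by (eapply rt_trans; eauto).
  assert (H2 : reds (u' ++ v') (a ++ b)) by (eapply rt_trans; eauto).
  transitivity (a ++ b); [apply reds_equiv | symmetry; apply reds_equiv]; auto.
Qed.

Global Instance app_Proper : Proper (equiv ==> equiv ==> equiv) (@app T).
Proof. intros ?? H ?? H'; apply equiv_app; auto. Qed.

Global Instance cons_Proper : Proper (eq ==> equiv ==> equiv) (@cons T).
Proof. intros a b -> ?? H. change (equiv ([b] ++ x) ([b] ++ y)); apply equiv_app; [reflexivity|exact H]. Qed.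

Lemma rule_equiv a b c (l : list T) : red_rule [a;b] [c] -> equiv (a :: b :: l) (c :: l).
Proof.
  intros R; apply reds_equiv, reds1. eapply step_intro with (p := []) (s := l); [exact R|reflexivity|reflexivity].
Qed.

Definition hdI (l : list T) : option (Xbar X) :=
  match l with [] => None | c :: _ => Some (iota_l c) end.
Fixpoint lastT (l : list T) : option (Xbar X) :=
  match l with [] => None | [c] => Some (tau_l c) | _ :: l' => lastT l' end.

Lemma last_indep (l : list T) c d : l <> [] -> last l c = last l d.
Proof. induction l; intros H; [congruence|]. destruct l; simpl; auto. apply IHl; discriminate. Qed.

Lemma lastT_last c (l : list T) : lastT (c :: l) = Some (tau_l (last l c)).
Proof.
  revert c; induction l; intros c; simpl; auto.
  destruct l as [|b l']; [reflexivity|].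
  change (lastT (b :: l') = Some (tau_l (last (b :: l') c))).
  pose proof (IHl a) as E. change (lastT (b :: l') = Some (tau_l (last (b :: l') a))) in E.
  rewrite E. f_equal; f_equal. apply last_indep; discriminate.
Qed.

Lemma lastT_cons c l : lastT (c :: l) = match lastT l with None => Some (tau_l c) | Some t => Some t end.
Proof. destruct l as [|d l]; [reflexivity|]. change (lastT (d :: l) = match lastT (d :: l) with None => Some (tau_l c) | Some t => Some t end). rewrite (lastT_last d l). reflexivity. Qed.

Lemma lastT_app (u v : list T) : lastT (u ++ v) = match lastT v with None => lastT u | Some t => Some t end.
Proof.
  induction u.
  - simpl; destruct (lastT v) eqn:E; auto.
  - rewrite <- app_comm_cons, !lastT_cons, IHu. destruct (lastT v); auto.
Qed.

Lemma step_markers (u v : list T) : red_step u v -> hdI u = hdI v /\ lastT u = lastT v.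
Proof.
  intros (p&s&l&r&R&->&->). split.
  - destruct p; simpl; auto. destruct R; reflexivity.
  - rewrite !lastT_app. destruct (lastT s); auto. destruct R; reflexivity.
Qed.

Lemma reds_markers (u v : list T) : reds u v -> hdI u = hdI v /\ lastT u = lastT v.
Proof.
  induction 1; [apply step_markers; auto | auto | intuition congruence].
Qed.

Lemma equiv_markers (u v : list T) : equiv u v -> hdI u = hdI v /\ lastT u = lastT v.
Proof.
  intros [w [[A _] [B _]]]. apply reds_markers in A; apply reds_markers in B. intuition congruence.
Qed.




Lemma R5' (x : Xbar X) : red_rule [TL x; TL (primeX x)] [TW x (primeX x)].
Proof. pose proof (R5 (primeX x)) as H; rewrite primeX_inv in H; exact H. Qed.

Lemma G1l (c : T) z : red_rule [c; TW z (tau_l c)] [c].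
Proof. destruct c; simpl; constructor. Qed.
Lemma G2l (c : T) z : red_rule [TW (iota_l c) z; c] [c].
Proof. destruct c; simpl; constructor. Qed.

Definition inv_l (c : T) : list T := match c with TL x => [TL (primeX x)] | TW x y => [TW x y] end.
Fixpoint invw (c : T) (l : list T) : list T :=
  match l with [] => inv_l c | d :: l' => invw d l' ++ TW (iota_l d) (tau_l c) :: inv_l c end.

Lemma P2base (c : T) y rest : equiv (c :: inv_l c ++ TW (iota_l c) y :: rest) (TW (iota_l c) y :: rest).
Proof.
  destruct c as [x|x z]; simpl.
  - rewrite (rule_equiv _ (R5' x)). apply rule_equiv; constructor.
  - rewrite (rule_equiv _ (R3 x z z)). apply rule_equiv; constructor.
Qed.

Lemma P3base (c : T) y rest : equiv (TW y (tau_l c) :: inv_l c ++ c :: rest) (TW y (tau_l c) :: rest).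
Proof.
  destruct c as [x|z x]; simpl.
  - rewrite (rule_equiv _ (R5 x)). apply rule_equiv; constructor.
  - rewrite (rule_equiv _ (R4 x z z)). apply rule_equiv; constructor.
Qed.

Lemma P2 : forall (l : list T) c y, equiv ((c :: l) ++ invw c l ++ [TW (iota_l c) y]) [TW (iota_l c) y].
Proof.
  induction l as [|d l IH]; intros c y.
  - simpl. apply P2base.
  - replace ((c :: d :: l) ++ invw c (d :: l) ++ [TW (iota_l c) y]) with
      (c :: ((d :: l) ++ invw d l ++ [TW (iota_l d) (tau_l c)]) ++ inv_l c ++ [TW (iota_l c) y])
      by (simpl; rewrite <- !app_assoc; reflexivity).
    rewrite IH. simpl. rewrite (rule_equiv _ (G1l c (iota_l d))). apply P2base.
Qed.

Lemma P3 : forall (l : list T) c t, lastT (c :: l) = Some t -> forall y,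
  equiv (TW y t :: invw c l ++ c :: l) [TW y t].
Proof.
  induction l as [|d l IH]; intros c t Ht y.
  - simpl in Ht. inversion Ht; subst. simpl. apply (P3base c y []).
  - rewrite lastT_cons in Ht. destruct (lastT (d :: l)) eqn:E; [|rewrite lastT_last in E; discriminate].
    inversion Ht; subst.
    simpl. rewrite <- app_assoc. simpl.
    rewrite (P3base c (iota_l d) (d :: l)).
    rewrite (rule_equiv _ (G2l d (tau_l c))).
    apply IH; auto.
Qed.

Lemma simple_list ca la cb lb ta : lastT (ca :: la) = Some ta ->
  equiv ((TW (iota_l cb) ta :: invw ca la) ++ (ca :: la) ++ (cb :: lb)) (cb :: lb).
Proof.
  intros H. rewrite app_assoc. rewrite <- (app_comm_cons (invw ca la)). rewrite (P3 _ _ H). simpl. apply rule_equiv, G2l.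
Qed.

Lemma prim_list (c : T) l x0 : equiv ((c :: l) ++ (c :: l)) (c :: l) ->
  equiv (TW x0 x0 :: c :: l) (c :: l) -> equiv ((c :: l) ++ [TW x0 x0]) (c :: l) ->
  equiv (c :: l) [TW x0 x0].
Proof.
  intros Hw Hb Hc.
  assert (iota_l c = x0) as Hi.
  { apply equiv_markers in Hb as [Hb _]; simpl in Hb; congruence. }
  subst x0. symmetry.
  transitivity ((c :: l) ++ invw c l ++ [TW (iota_l c) (iota_l c)]); [symmetry; apply P2|].
  transitivity (((c :: l) ++ (c :: l)) ++ invw c l ++ [TW (iota_l c) (iota_l c)]).
  { apply equiv_app; [symmetry; exact Hw| reflexivity]. }
  rewrite <- app_assoc. rewrite (P2 l c (iota_l c)). exact Hc.
Qed.

End Rew.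
Section CS.
Variables (S : Type) (m : S -> S -> S).
Hypothesis HA : sg_assoc m.
Hypothesis Hsimp : simple_sg m.
Variable e : S.
Hypothesis He : primitive_idem m e.
Local Notation "a ** b" := (m a b) (at level 40, left associativity).

Ltac norm := repeat rewrite HA.
Ltac normin H := repeat rewrite HA in H.

Lemma L0 a b : exists s t, b = s ** a ** t.
Proof.
  set (I := fun x => exists s t, x = s ** a ** t).
  assert (HI : is_ideal m I).
  { split. exists (a ** a ** a); exists a, a; reflexivity.
    intros x s (s0 & t0 & ->). split.
    - exists (s ** s0), t0. norm; reflexivity.
    - exists s0, (t0 ** s). norm; reflexivity. }
  apply (Hsimp HI b).
Qed.

Lemma ee : e ** e = e.
Proof. apply (proj1 He). Qed.


Ltac ext H :=
  let H' := fresh H "x" in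
  match type of H with ?L = ?R =>
    assert (H' : forall z, z ** L = z ** R) by (intro; rewrite H; reflexivity);
    repeat setoid_rewrite HA in H'
  end.

Lemma ginv b : e ** b = b -> b ** e = b -> exists u, e ** u = u /\ u ** e = u /\ u ** b = e /\ b ** u = e.
Proof.
  intros Heb Hbe. destruct (L0 b e) as (x & y & Hxy).
  pose proof ee as Hee. ext Heb. ext Hbe. ext Hee.
  assert (Hxy' : x ** b ** y = e) by auto. ext Hxy'.
  set (U := e ** x ** e). set (V := e ** y ** e).
  assert (C1 : U ** b ** V = e).
  { unfold U, V. norm. rewrite Hebx, Hbex, Hxy'x, Hee, Hee. reflexivity. }
  assert (eU : e ** U = U) by (unfold U; norm; rewrite Hee; reflexivity).
  assert (Ue : U ** e = U) by (unfold U; rewrite Heex; reflexivity).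
  assert (eV : e ** V = V) by (unfold V; norm; rewrite Hee; reflexivity).
  assert (Ve : V ** e = V) by (unfold V; rewrite Heex; reflexivity).
  ext C1. ext Ue.
  assert (H1 : V ** U ** b = e).
  { apply (proj2 He).
    - norm. rewrite C1x, Ve. reflexivity.
    - norm. rewrite eV. reflexivity.
    - rewrite Hbex. reflexivity. }
  ext H1.
  assert (H2 : b ** V ** U = e).
  { apply (proj2 He).
    - norm. rewrite H1x, Hbe. reflexivity.
    - norm. rewrite Heb. reflexivity.
    - rewrite Uex. reflexivity. }
  exists (V ** U); repeat split.
  - norm; rewrite eV; reflexivity.
  - apply Uex.
  - norm; exact H1.
  - norm; exact H2.
Qed.

Lemma grp_comm a b : e ** a = a -> a ** e = a -> e ** b = b -> b ** e = b -> a ** b = e -> b ** a = e.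
Proof.
  intros H1 H2 H3 H4 H5. destruct (ginv H1 H2) as (u & U1 & U2 & U3 & U4).
  assert (b = u).
  { rewrite <- H3, <- U3, <- HA, H5. exact U2. }
  subst; auto.
Qed.

Lemma decomp c : exists s t, c = s ** t /\ s ** e = s /\ e ** t = t.
Proof.
  destruct (L0 e c) as (s & t & ->). pose proof ee as Hee. ext Hee.
  exists (s ** e), (e ** t); repeat split.
  - norm. rewrite Heex. reflexivity.
  - rewrite Heex; reflexivity.
  - norm; rewrite Hee; reflexivity.
Qed.

Lemma T2 c : exists c', c ** c' ** c = c /\ c' ** c ** c' = c' /\ c ** c' = c' ** c.
Proof.
  destruct (decomp c) as (s & t & -> & Hs & Ht).
  assert (Hg1 : e ** (t ** s) = t ** s) by (norm; rewrite Ht; reflexivity).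
  assert (Hg2 : (t ** s) ** e = t ** s) by (rewrite <- HA, Hs; reflexivity).
  destruct (ginv Hg1 Hg2) as (g & G1 & G2 & G3 & G4).
  normin G3. normin G4. ext Hs. ext G2. ext G3. ext G4.
  exists (s ** g ** g ** t); repeat split.
  all: norm; repeat first [rewrite G4x | rewrite G4 | rewrite Hsx | rewrite Hs | rewrite G3x | rewrite G3 | rewrite G2x | rewrite G2]; reflexivity.
Qed.

Lemma T3r a s : exists t, a ** s ** t = a.
Proof.
  destruct (decomp a) as (s1 & t1 & -> & Hs & Ht).
  destruct (L0 (t1 ** s) e) as (x & y & Hxy).
  pose proof ee as Hee. ext Hee. ext Ht. ext Hs.
  assert (Hxy' : x ** t1 ** s ** y = e) by (normin Hxy; auto). ext Hxy'.
  assert (A1 : e ** (e ** x ** e) = e ** x ** e) by (norm; rewrite Hee; reflexivity).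
  assert (A2 : (e ** x ** e) ** e = e ** x ** e) by (rewrite Heex; reflexivity).
  assert (B1 : e ** (t1 ** s ** y ** e) = t1 ** s ** y ** e) by (norm; rewrite Ht; reflexivity).
  assert (B2 : (t1 ** s ** y ** e) ** e = t1 ** s ** y ** e) by (rewrite Heex; reflexivity).
  assert (AB : (e ** x ** e) ** (t1 ** s ** y ** e) = e).
  { norm. rewrite Htx, Hxy'x, Hee, Hee. reflexivity. }
  pose proof (grp_comm A1 A2 B1 B2 AB) as BA. normin BA. rewrite Heex in BA. ext BA.
  exists (y ** e ** x ** e ** t1). norm. rewrite BAx, Hs. reflexivity.
Qed.

Lemma T3l a s : exists t, t ** (s ** a) = a.
Proof.
  destruct (decomp a) as (s1 & t1 & -> & Hs & Ht).
  destruct (L0 (s ** s1) e) as (x & y & Hxy).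
  pose proof ee as Hee. ext Hee. ext Ht. ext Hs.
  assert (Hxy' : x ** s ** s1 ** y = e) by (normin Hxy; auto). ext Hxy'.
  assert (A1 : e ** (e ** x ** s ** s1) = e ** x ** s ** s1) by (norm; rewrite Hee; reflexivity).
  assert (A2 : (e ** x ** s ** s1) ** e = e ** x ** s ** s1) by (rewrite Hsx; reflexivity).
  assert (B1 : e ** (e ** y ** e) = e ** y ** e) by (norm; rewrite Hee; reflexivity).
  assert (B2 : (e ** y ** e) ** e = e ** y ** e) by (rewrite Heex; reflexivity).
  assert (AB : (e ** x ** s ** s1) ** (e ** y ** e) = e).
  { norm. rewrite Hsx, Hxy'x, Hee, Hee. reflexivity. }
  pose proof (grp_comm A1 A2 B1 B2 AB) as BA. normin BA. rewrite Heex in BA. ext BA.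
  exists (s1 ** e ** y ** e ** x). norm. rewrite BAx, Hs. reflexivity.
Qed.

Lemma Eex p q : exists E, E ** E = E /\ E ** p = p /\ q ** E = q /\ (exists s, E = p ** s) /\ (exists t, E = t ** q).
Proof.
  destruct (T2 (p ** q)) as (c & C1 & C2 & C3).
  destruct (T3r p q) as (t & Ht). destruct (T3l q p) as (t' & Ht').
  normin C1. normin C3. normin Ht'. ext C1. ext C3.
  exists (p ** q ** c); repeat split.
  - norm. rewrite C1. reflexivity.
  - rewrite <- Ht at 2. norm. rewrite C1. exact Ht.
  - rewrite <- Ht' at 1. norm. rewrite C3x, C1x. exact Ht'.
  - exists (q ** c); norm; reflexivity.
  - exists (c ** p). norm. exact C3.
Qed.

End CS.

Lemma Euniq (S : Type) (m : S -> S -> S) (HA : sg_assoc m) p q E F :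
  (m E E = E /\ m E p = p /\ m q E = q /\ (exists s, E = m p s) /\ (exists t, E = m t q)) ->
  (m F F = F /\ m F p = p /\ m q F = q /\ (exists s, F = m p s) /\ (exists t, F = m t q)) ->
  E = F.
Proof.
  intros (E1 & E2 & E3 & [s Es] & [t Et]) (F1 & F2 & F3 & [s' Fs] & [t' Ft]).
  assert (A : m E F = E) by (rewrite Et at 1; rewrite <- HA, F3; symmetry; exact Et).
  assert (B : m E F = F) by (rewrite Fs at 1; rewrite HA, E2; symmetry; exact Fs).
  congruence.
Qed.

Lemma CS_E (S : Type) (m : S -> S -> S) : completely_simple m -> forall p q,
  exists E, m E E = E /\ m E p = p /\ m q E = q /\ (exists s, E = m p s) /\ (exists t, E = m t q).
Proof.
  intros (HA & Hs & e & He) p q. exact (Eex HA Hs He p q).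
Qed.

Section F.
Variable X : Type.

Lemma sig_eq_aux (P Q : neword X -> Prop) H1 H2 : P = Q ->
  exist (fun P => exists u, P = ThetaCS u) P H1 = exist (fun P => exists u, P = ThetaCS u) Q H2.
Proof. intros ->; f_equal; apply proof_irrelevance. Qed.

Lemma cls_eq (u v : neword X) : equiv (to_list u) (to_list v) -> cls u = cls v.
Proof.
  intros H. unfold cls; apply sig_eq_aux. extensionality w; apply propositional_extensionality.
  unfold ThetaCS. change (equiv (to_list u) (to_list w) <-> equiv (to_list v) (to_list w)).
  split; intro H'; eauto using equiv_trans, equiv_sym.
Qed.

Lemma cls_inj (u v : neword X) : cls u = cls v -> equiv (to_list u) (to_list v).
Proof.
  intros H. apply (f_equal (@proj1_sig _ _)) in H. simpl in H.
  assert (ThetaCS v v) by apply equiv_refl. rewrite <- H in H0. exact H0.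
Qed.

Lemma cls_rep (P : FactorCS X) : cls (rep P) = P.
Proof.
  destruct P as [P HP]. unfold rep; simpl.
  destruct (constructive_indefinite_description _ HP) as [u Hu]; simpl.
  unfold cls. apply sig_eq_aux. auto.
Qed.

Lemma rep_cls (u : neword X) : equiv (to_list (rep (cls u))) (to_list u).
Proof. apply cls_inj. apply cls_rep. Qed.

Lemma mul_cls (u v : neword X) : factor_mul (cls u) (cls v) = cls (nw_cat u v).
Proof.
  unfold factor_mul. apply cls_eq.
  change (equiv (to_list (rep (cls u)) ++ to_list (rep (cls v))) (to_list u ++ to_list v)).
  apply equiv_app; apply rep_cls.
Qed.

Lemma cls_ind (P : FactorCS X) : exists c l, P = cls (NeWord c l).
Proof. rewrite <- (cls_rep P). destruct (rep P) as [c l]. eauto. Qed.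

End F.

Section Ev.
Variables (X S : Type) (m : S -> S -> S) (E : S -> S -> S) (nu : Xbar X -> S).
Hypothesis HA : sg_assoc m.

Definition evL (c : tletter X) : S := match c with TL a => nu a | TW a b => E (nu a) (nu b) end.
Definition ev1 (a b : option S) : option S :=
  match a, b with
  | Some x, Some y => Some (m x y)
  | Some x, None => Some x
  | None, y => y end.
Fixpoint evO (l : list (tletter X)) : option S :=
  match l with [] => None | c :: l' => ev1 (Some (evL c)) (evO l') end.
Definition evW (c : tletter X) (l : list (tletter X)) : S :=
  match evO l with None => evL c | Some t => m (evL c) t end.

Lemma evO_cons c l : evO (c :: l) = Some (evW c l).
Proof. simpl; unfold evW; destruct (evO l); reflexivity. Qed.

Lemma ev1_assoc a b c : ev1 a (ev1 b c) = ev1 (ev1 a b) c.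
Proof. destruct a, b, c; simpl; try rewrite HA; reflexivity. Qed.

Lemma evO_app u v : evO (u ++ v) = ev1 (evO u) (evO v).
Proof.
  induction u as [|c u IH].
  - simpl; destruct (evO v); reflexivity.
  - change (ev1 (Some (evL c)) (evO (u ++ v)) = ev1 (ev1 (Some (evL c)) (evO u)) (evO v)).
    rewrite IH, ev1_assoc. reflexivity.
Qed.

Definition Espec p q F := m F F = F /\ m F p = p /\ m q F = q /\ (exists s, F = m p s) /\ (exists t, F = m t q).
Hypothesis EP : forall p q, Espec p q (E p q).
Hypothesis Hnu : matched m nu.

Lemma prodSpec a b : m a (m b a) = a -> m b (m a b) = b -> Espec a b (m a b).
Proof.
  intros H1 H2; repeat split.
  - rewrite <- HA, H2; reflexivity.
  - rewrite <- HA, H1; reflexivity.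
  - exact H2.
  - eauto.
  - eauto.
Qed.

Lemma rule_ev l r : red_rule l r -> evO l = evO r.
Proof.
  intros R; destruct R; simpl; f_equal.
  - destruct (EP (nu y) (nu x)) as (_&_&H&_); exact H.
  - destruct (EP (nu x) (nu y)) as (_&H&_); exact H.
  - destruct (EP (nu x) (nu z)) as (_&_&_&[s Hs]&_).
    destruct (EP (nu x) (nu y)) as (_&H&_).
    rewrite Hs, HA, H. reflexivity.
  - destruct (EP (nu z) (nu x)) as (_&_&_&_&[t Ht]).
    destruct (EP (nu y) (nu x)) as (_&_&H&_).
    rewrite Ht, <- HA, H. reflexivity.
  - apply (Euniq HA (p := nu (primeX x)) (q := nu x)); [|apply EP].
    destruct x as [x|x]; simpl; destruct (Hnu x) as [H1 H2].
    + apply prodSpec; auto.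
    + apply prodSpec; auto.
Qed.

Lemma reds_ev u v : reds u v -> evO u = evO v.
Proof.
  induction 1 as [u v (p&s&l&r&R&->&->)| |]; try congruence.
  rewrite !evO_app, (rule_ev R). reflexivity.
Qed.

Lemma equiv_ev u v : equiv u v -> evO u = evO v.
Proof. intros [w [[A _] [B _]]]. rewrite (reds_ev A), (reds_ev B). reflexivity. Qed.

End Ev.

Lemma to_list_cat X (u v : neword X) : to_list (nw_cat u v) = to_list u ++ to_list v.
Proof. reflexivity. Qed.

Lemma congr_part (X : Type) : bin_congruence (@ThetaCS X).
Proof.
  unfold ThetaCS; change (bin_congruence (fun u v : neword X => equiv (to_list u) (to_list v))).
  split; [|split; [|split]].
  - intros; apply equiv_refl.
  - intros; apply equiv_sym; auto.
  - intros; eapply equiv_trans; eauto.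
  - intros u1 v1 u1' v1' H1 H2. split.
   + rewrite !to_list_cat. apply equiv_app; auto.
   + unfold nw_wedge.
    apply equiv_markers in H1 as [H1 _]. apply equiv_markers in H2 as [_ H2].
    unfold to_list in H2; rewrite !lastT_last in H2. simpl in H1.
    unfold nw_iota, nw_tau. inversion H1. inversion H2. rewrite H0, H3. apply equiv_refl.
Qed.

Lemma cs_part (X : Type) (HX : inhabited X) : completely_simple (@factor_mul X).
Proof.
  split; [|split].
  - intros a b c. rewrite <- (cls_rep a), <- (cls_rep b), <- (cls_rep c), !mul_cls.
    apply cls_eq. rewrite !to_list_cat, app_assoc. apply equiv_refl.
  - intros I [[a0 Ia] Hcl] b.
    destruct (cls_ind a0) as (ca & la & ->). destruct (cls_ind b) as (cb & lb & ->).
    set (s := cls (NeWord (TW (iota_l cb) (tau_l (last la ca))) (invw ca la))).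
    assert (E : cls (NeWord cb lb) = factor_mul (factor_mul s (cls (NeWord ca la))) (cls (NeWord cb lb))).
    { unfold s; rewrite !mul_cls. apply cls_eq. rewrite !to_list_cat. symmetry.
      unfold to_list; simpl nw_hd; simpl nw_tl. rewrite <- app_assoc. apply simple_list. apply lastT_last. }
    rewrite E. apply (Hcl _ _ (proj1 (Hcl _ s Ia))).
  - destruct HX as [x0].
    exists (cls (NeWord (TW (inl x0) (inl x0)) [])). split.
    + rewrite mul_cls. apply cls_eq. apply rule_equiv. constructor.
    + intros f Hff Hef Hfe. destruct (cls_ind f) as (c & l & ->).
      rewrite mul_cls in Hff, Hef, Hfe.
      apply cls_inj in Hff. apply cls_inj in Hef. apply cls_inj in Hfe.
      apply cls_eq. apply prim_list; auto.
Qed.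

Lemma matched_part (X : Type) : matched (@factor_mul X) (@factor_xi X).
Proof.
  intros x; unfold factor_xi; split; rewrite !mul_cls; apply cls_eq; cbv [to_list nw_cat nw_single nw_hd nw_tl app].
  - pose proof (R5 (inl x)) as H; simpl in H. rewrite (rule_equiv _ H).
    apply rule_equiv; constructor.
  - pose proof (R5 (inr x)) as H; simpl in H. rewrite (rule_equiv _ H).
    apply rule_equiv; constructor.
Qed.

Theorem proposition2p6 (X : Type) (HX : inhabited X) :
  bin_congruence (@ThetaCS X) /\
  @bifree_CS X (FactorCS X) (@factor_mul X) (@factor_xi X).
Proof.
  split; [apply congr_part|]. split; [apply cs_part; auto|]. split; [apply matched_part|].
  intros S mS HCS nu Hnu.
  pose proof HCS as (HA & _ & _).
  set (E := fun p q => proj1_sig (constructive_indefinite_description _ (CS_E HCS p q))).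
  assert (EP : forall p q, Espec mS p q (E p q)).
  { intros p q; unfold E; destruct (constructive_indefinite_description _ (CS_E HCS p q)) as [F HF]; exact HF. }
  set (phi := fun P : FactorCS X => evW mS E nu (nw_hd (rep P)) (nw_tl (rep P))).
  assert (Hphi : forall u, Some (phi (cls u)) = evO mS E nu (to_list u)).
  { intros u. unfold phi. rewrite <- evO_cons. apply (equiv_ev E HA EP Hnu). apply rep_cls. }
  assert (Hhom : sg_hom (@factor_mul X) mS phi).
  { intros a b. rewrite <- (cls_rep a), <- (cls_rep b), mul_cls.
    assert (Some (phi (cls (nw_cat (rep a) (rep b)))) = Some (mS (phi (cls (rep a))) (phi (cls (rep b))))) as H.
    { rewrite !Hphi, to_list_cat, (evO_app E nu HA), <- !Hphi. reflexivity. }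
    inversion H; auto. }
  assert (Hxi : forall y, phi (factor_xi y) = nu y).
  { intros y. assert (Some (phi (factor_xi y)) = Some (nu y)) as H by (unfold factor_xi; rewrite Hphi; reflexivity).
    inversion H; auto. }
  exists phi; split; [exact Hhom|]; split; [exact Hxi|].
  intros psi Hpsi Hpxi b.
  rewrite <- (cls_rep b). destruct (rep b) as [c l]. clear b.
  assert (Hlet : forall c, psi (cls (NeWord c [])) = phi (cls (NeWord c []))).
  { intros c0. destruct c0 as [a|a b'].
    + change (psi (factor_xi a) = phi (factor_xi a)). rewrite Hpxi, Hxi. reflexivity.
    + assert (Some (phi (cls (NeWord (TW a b') []))) = Some (E (nu a) (nu b'))) as H by (rewrite Hphi; reflexivity).
      inversion H as [H']; rewrite H'; clear H H'.
      apply (Euniq HA (p := nu a) (q := nu b')); [|apply EP].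
      set (w := cls (NeWord (TW a b') [])).
      repeat split.
      * rewrite <- Hpsi. unfold w; rewrite mul_cls. f_equal. apply cls_eq. apply rule_equiv; constructor.
      * rewrite <- Hpxi, <- Hpsi. unfold w, factor_xi; rewrite mul_cls. f_equal. apply cls_eq. apply rule_equiv; constructor.
      * rewrite <- Hpxi, <- Hpsi. unfold w, factor_xi; rewrite mul_cls. f_equal. apply cls_eq. apply rule_equiv; constructor.
      * exists (psi (cls (NeWord (TL (primeX a)) [TW a b']))).
        rewrite <- Hpxi, <- Hpsi. unfold w, factor_xi; rewrite mul_cls. f_equal. apply cls_eq.
        cbv [to_list nw_cat nw_single nw_hd nw_tl app]. symmetry. rewrite (rule_equiv _ (R5' a)). apply rule_equiv; constructor.
      * exists (psi (cls (NeWord (TW a b') [TL (primeX b')]))).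
        rewrite <- Hpxi, <- Hpsi. unfold w, factor_xi; rewrite mul_cls. f_equal. apply cls_eq.
        cbv [to_list nw_cat nw_single nw_hd nw_tl app]. symmetry. rewrite (rule_equiv _ (R5 b')). apply rule_equiv; constructor.
  }
  revert c; induction l as [|d l IH]; intros c; [apply Hlet|].
  assert (Hc : cls (NeWord c (d :: l)) = factor_mul (cls (NeWord c [])) (cls (NeWord d l))) by (rewrite mul_cls; reflexivity).
  rewrite Hc, Hpsi, Hhom, IH, Hlet. reflexivity.
Qed.
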